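(* Fix $i\in\mathcal N$. Suppose the subsystem $\mathcal G_i$ is QSR-dissipative with storage function $V_i$ and matrices $\mathbf Q_i\in\mathbb S^{n_y}$ with $\mathbf Q_i\prec 0$, $\mathbf S_i\in\mathbb R^{n_y\times n_u}$, $\mathbf R_i\in\mathbb S^{n_u}$. Suppose the scheduling matrices $\boldsymbol\Phi_{u,i},\boldsymbol\Phi_{y,i}$ pseudo-commute with $\mathbf S_i$, i.e. $\boldsymbol\Phi_{y,i}(t)^\top\mathbf S_i=\mathbf S_i\boldsymbol\Phi_{u,i}(t)$ for all $t\ge 0$, and that $\boldsymbol\Phi_{y,i}(t)\neq\mathbf 0$ for some $t\ge0$. Define $\bar\sigma_{y,i}=\sup_{t\ge0}\sigma_{y,i}(t)$, $\bar\sigma_{u,i}=\sup_{t\ge0}\sigma_{u,i}(t)$, $\bar\nu_{u,i}=\inf_{t\ge0}\nu_{u,i}(t)$, $\varepsilon_i=-\lambda_{\max}(\mathbf Q_i)>0$, and $\delta_i=\lambda_{\max}(\mathbf R_i)\bar\sigma_{y,i}^2\bar\sigma_{u,i}^2$ if $\lambda_{\max}(\mathbf R_i)>0$, $\delta_i=\lambda_{\max}(\mathbf R_i)\bar\sigma_{y,i}^2\bar\nu_{u,i}^2$ if $\lambda_{\max}(\mathbf R_i)\le 0$. Then the scheduled subsystem $\bar{\mathcal G}_i:\mathbf u\mapsto\bar{\mathbf y}_i=\boldsymbol\Phi_{y,i}\mathcal G_i(\boldsymbol\Phi_{u,i}\mathbf u)$ is QSR-dissipative with storage function $\bar\sigma_{y,i}^2V_i$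 and matrices $\bar{\mathbf Q}_i=-\varepsilon_i\mathbf 1$, $\bar{\mathbf S}_i=\bar\sigma_{y,i}^2\mathbf S_i$, $\bar{\mathbf R}_i=\delta_i\mathbf 1$; that is, for all $\mathbf u\in\mathcal L_{2e}$ and $T\ge0$, $\bar\sigma_{y,i}^2\big(V_i(\mathbf x_i(T))-V_i(\mathbf x_i(0))\big)\le -\varepsilon_i\|\bar{\mathbf y}_i\|_{2T}^2+2\bar\sigma_{y,i}^2\langle\bar{\mathbf y}_i,\mathbf S_i\mathbf u\rangle_T+\delta_i\|\mathbf u\|_{2T}^2.$
   Context: Signals: for $\mathbf u,\mathbf y:\mathbb R_{\ge0}\to\mathbb R^n$, $\langle\mathbf u,\mathbf y\rangle_T=\int_0^T\mathbf u(t)^\top\mathbf y(t)\,dt$ and $\|\mathbf u\|_{2T}^2=\langle\mathbf u,\mathbf u\rangle_T$; $\mathcal L_{2e}$ is the set of piecewise continuous signals with $\|\mathbf u\|_{2T}<\infty$ for all $T\ge0$. $\mathbb S^n$ denotes real symmetric $n\times n$ matrices, $\mathbf 1$ the identity. A causal system $\dot{\mathbf x}=\mathbf f(\mathbf x,\mathbf u)$, $\mathbf y=\mathbf h(\mathbf x,\mathbf u)$ with $\mathbf x\in\mathbb R^{n_x},\mathbf u\in\mathbb R^{n_u},\mathbf y\in\mathbb R^{n_y}$ is QSR-dissipative with $\mathbf Q\in\mathbb S^{n_y}$, $\mathbf S\in\mathbb R^{n_y\times n_u}$, $\mathbf R\in\mathbb S^{n_u}$ if there is a storage function $V:\mathbb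 R^{n_x}\to\mathbb R_{\ge0}$ with $\langle\mathbf y,\mathbf Q\mathbf y\rangle_T+2\langle\mathbf y,\mathbf S\mathbf u\rangle_T+\langle\mathbf u,\mathbf R\mathbf u\rangle_T\ge V(\mathbf x(T))-V(\mathbf x(0))$ for all $\mathbf u\in\mathcal L_{2e}$, $T\ge0$. Gain-scheduled system: $\mathcal N=\{1,\dots,N\}$; subsystems $\mathcal G_i$ with state $\mathbf x_i$, input $\mathbf u_i\in\mathbb R^{n_u}$, output $\mathbf y_i=\mathcal G_i(\mathbf u_i)\in\mathbb R^{n_y}$. Scheduling matrices $\boldsymbol\Phi_{u,i}:\mathbb R_{\ge0}\to\mathbb R^{n_u\times n_u}$, $\boldsymbol\Phi_{y,i}:\mathbb R_{\ge0}\to\mathbb R^{n_y\times n_y}$ are piecewise continuous and bounded: $\sup_{t\ge0}\|\boldsymbol\Phi_{j,i}(t)\|_2<\infty$. The scheduled signals are $\mathbf u_i(t)=\boldsymbol\Phi_{u,i}(t)\mathbf u(t)$, $\bar{\mathbf y}_i(t)=\boldsymbol\Phi_{y,i}(t)\mathbf y_i(t)$, and the overall gain-scheduled system $\bar{\mathcal G}$ has input $\mathbf u$, state $(\mathbf x_1,\dots,\mathbf x_N)$ and output $\mathbf y(t)=\sum_{i\in\mathcal N}\bar{\mathbf y}_i(t)$. Notation: $\sigma_{y,i}(t)$ is the largest singular value of $\boldsymbol\Phi_{y,i}(t)$; $\sigma_{u,i}(t)$ and $\nu_{u,i}(t)$ are the largest and smallest singular values of $\boldsymbol\Phi_{u,i}(t)$.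 *)

(* Defs.v *)
From HB Require Import structures.
From mathcomp Require Import all_boot all_order all_algebra.
From mathcomp Require Import all_classical all_reals all_analysis.
Set Implicit Arguments. Unset Strict Implicit. Unset Printing Implicit Defensive.
Import Order.TTheory GRing.Theory Num.Theory.
Import numFieldNormedType.Exports.
Local Open Scope classical_set_scope.
Local Open Scope ring_scope.

Section Defs.
Variable R : realType.

Definition I0 (T : R) : set R := [set t : R | 0 <= t <= T].

Definition piecewise_continuous (m n : nat) (f : R -> 'M[R]_(m, n)) : Prop :=
  forall T : R, exists s : seq R,
    (forall t : R, 0 < t -> t <= T -> t \notin s -> {for t, continuous f}) /\
    (forall t : R, 0 < t -> t <= T -> cvg (f @ t^'-)) /\
    (forall t : R, 0 <= t -> t <= T -> cvg (f @ t^'+)).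

Definition vdot (n : nat) (a b : 'cV[R]_n) : R := (a^T *m b) 0 0.

Definition inner (n : nat) (u y : R -> 'cV[R]_n) (T : R) : R :=
  Rintegral lebesgue_measure (I0 T) (fun t => vdot (u t) (y t)).

Definition norm2T2 (n : nat) (u : R -> 'cV[R]_n) (T : R) : R := inner u u T.

Definition loc_L2 (n : nat) (u : R -> 'cV[R]_n) : Prop :=
  forall T, 0 <= T ->
    lebesgue_measure.-integrable (I0 T) (fun t => (vdot (u t) (u t))%:E).

Definition L2e (n : nat) (u : R -> 'cV[R]_n) : Prop :=
  piecewise_continuous u /\ loc_L2 u.

(* (Caratheodory) trajectory of xdot = f(x,u), y = h(x,u) driven by u:
   x(t) = x(0) + int_0^t f(x(s),u(s)) ds  and  y(t) = h(x(t),u(t)), t >= 0. *)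
Definition trajectory (nx nu ny : nat)
  (f : 'cV[R]_nx -> 'cV[R]_nu -> 'cV[R]_nx)
  (h : 'cV[R]_nx -> 'cV[R]_nu -> 'cV[R]_ny)
  (u : R -> 'cV[R]_nu) (x : R -> 'cV[R]_nx) (y : R -> 'cV[R]_ny) : Prop :=
  forall t, 0 <= t ->
    y t = h (x t) (u t) /\
    forall i : 'I_nx,
      lebesgue_measure.-integrable (I0 t) (fun s => (f (x s) (u s) i 0)%:E) /\
      x t i 0 = x 0 i 0 + Rintegral lebesgue_measure (I0 t) (fun s => f (x s) (u s) i 0).

(* Standing well-posedness: the system maps L_2e inputs to outputs with
   finite ||y||_{2T} (so that the inner products in the supply rate exist). *)
Definition L2e_outputs (nx nu ny : nat)
  (f : 'cV[R]_nx -> 'cV[R]_nu -> 'cV[R]_nx)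
  (h : 'cV[R]_nx -> 'cV[R]_nu -> 'cV[R]_ny) : Prop :=
  forall u x y, L2e u -> trajectory f h u x y -> loc_L2 y.

Definition QSR_dissipative (nx nu ny : nat)
  (f : 'cV[R]_nx -> 'cV[R]_nu -> 'cV[R]_nx)
  (h : 'cV[R]_nx -> 'cV[R]_nu -> 'cV[R]_ny)
  (V : 'cV[R]_nx -> R) (Q : 'M[R]_ny) (S : 'M[R]_(ny, nu)) (Rm : 'M[R]_nu)
  : Prop :=
  (forall z, 0 <= V z) /\
  forall u x y (T : R), L2e u -> trajectory f h u x y -> 0 <= T ->
    inner y (fun t => Q *m y t) T + 2 * inner y (fun t => S *m u t) T
      + inner u (fun t => Rm *m u t) T >= V (x T) - V (x 0).

Definition sym_mx (n : nat) (A : 'M[R]_n) : Prop := A^T = A.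
Definition neg_def (n : nat) (A : 'M[R]_n) : Prop :=
  forall z : 'cV[R]_n, z != 0 -> vdot z (A *m z) < 0.

Definition lambda_max (n : nat) (A : 'M[R]_n) : R := sup [set a : R | eigenvalue A a].
Definition lambda_min (n : nat) (A : 'M[R]_n) : R := inf [set a : R | eigenvalue A a].

Definition sigma_max (n : nat) (A : 'M[R]_n) : R := Num.sqrt (lambda_max (A^T *m A)).
Definition sigma_min (n : nat) (A : 'M[R]_n) : R := Num.sqrt (lambda_min (A^T *m A)).

Definition scheduling_matrix (n : nat) (Phi : R -> 'M[R]_n) : Prop :=
  piecewise_continuous Phi /\
  exists M : R, forall t, 0 <= t -> sigma_max (Phi t) <= M.

Definition sup_t (g : R -> R) : R := sup [set g t | t in [set t : R | 0 <= t]].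
Definition inf_t (g : R -> R) : R := inf [set g t | t in [set t : R | 0 <= t]].

End Defs.

(* Main.v *)
Require Import Defs.
From HB Require Import structures.
From mathcomp Require Import all_boot all_order all_algebra.
From mathcomp Require Import all_classical all_reals all_analysis.
From mathcomp Require Import lra ring measurable_realfun.
Import Order.TTheory GRing.Theory Num.Theory.
Import numFieldNormedType.Exports.
Local Open Scope classical_set_scope.
Local Open Scope ring_scope.
Set Implicit Arguments. Unset Strict Implicit. Unset Printing Implicit Defensive.

Section LA.
Variable R : realType.
Implicit Types n : nat.

Lemma vdotE n (a b : 'cV[R]_n) : vdot a b = \sum_i a i 0 * b i 0.
Proof. by rewrite /vdot mxE; apply: eq_bigr => i _; rewrite mxE. Qed.

Lemma vdotC n (a b : 'cV[R]_n) : vdot a b = vdot b a.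
Proof. by rewrite !vdotE; apply: eq_bigr => i _; rewrite mulrC. Qed.

Lemma vdot_ge0 n (a : 'cV[R]_n) : 0 <= vdot a a.
Proof. by rewrite vdotE; apply: sumr_ge0 => i _; rewrite -expr2 sqr_ge0. Qed.

Lemma vdot_eq0 n (a : 'cV[R]_n) : vdot a a = 0 -> a = 0.
Proof.
rewrite vdotE => /psumr_eq0P H; apply/matrixP => i j.
have /(_ i isT)/eqP := H (fun i _ => sqr_ge0 _).
by rewrite (ord1 j) mxE -expr2 sqrf_eq0 => /eqP.
Qed.

Lemma vdot_gt0 n (a : 'cV[R]_n) : a != 0 -> 0 < vdot a a.
Proof.
move=> a0; rewrite lt_neqAle vdot_ge0 andbT; apply/eqP => /esym/vdot_eq0.
by move/eqP: a0.
Qed.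

Lemma vdot0l n (b : 'cV[R]_n) : vdot 0 b = 0.
Proof. by rewrite vdotE big1 // => i _; rewrite mxE mul0r. Qed.

Lemma vdotDr n (a b c : 'cV[R]_n) : vdot a (b + c) = vdot a b + vdot a c.
Proof. by rewrite !vdotE -big_split; apply: eq_bigr => i _; rewrite mxE mulrDr. Qed.

Lemma vdotZr n (a b : 'cV[R]_n) k : vdot a (k *: b) = k * vdot a b.
Proof. by rewrite !vdotE mulr_sumr; apply: eq_bigr => i _; rewrite mxE mulrCA. Qed.

Lemma vdotNr n (a b : 'cV[R]_n) : vdot a (- b) = - vdot a b.
Proof. by rewrite -scaleN1r vdotZr mulN1r. Qed.

Lemma vdotDl n (a b c : 'cV[R]_n) : vdot (b + c) a = vdot b a + vdot c a.
Proof. by rewrite vdotC vdotDr !(vdotC a). Qed.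

Lemma vdotZl n (a b : 'cV[R]_n) k : vdot (k *: b) a = k * vdot b a.
Proof. by rewrite vdotC vdotZr vdotC. Qed.

Lemma vdotNl n (a b : 'cV[R]_n) : vdot (- b) a = - vdot b a.
Proof. by rewrite vdotC vdotNr vdotC. Qed.

Lemma vdot_mul n m (a : 'cV[R]_n) (A : 'M[R]_(n, m)) (b : 'cV[R]_m) :
  vdot a (A *m b) = vdot (A^T *m a) b.
Proof. by rewrite /vdot trmx_mul trmxK mulmxA. Qed.

Lemma coord_le_vdot n (a : 'cV[R]_n) i : a i 0 ^+ 2 <= vdot a a.
Proof.
rewrite vdotE (bigD1 i) //= -expr2 lerDl; apply: sumr_ge0 => j _.
by rewrite -expr2 sqr_ge0.
Qed.

Definition nrm n (A : 'M[R]_n) : R := \sum_i \sum_j `|A i j|.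

Lemma nrm_ge0 n (A : 'M[R]_n) : 0 <= nrm A.
Proof. by apply: sumr_ge0 => i _; apply: sumr_ge0 => j _. Qed.

Lemma quad_bound n (A : 'M[R]_n) (z : 'cV[R]_n) :
  `|vdot z (A *m z)| <= nrm A * vdot z z.
Proof.
have -> : vdot z (A *m z) = \sum_i \sum_j (z i 0 * A i j * z j 0).
  rewrite vdotE; apply: eq_bigr => i _; rewrite mxE mulr_sumr.
  by apply: eq_bigr => j _; rewrite mulrA.
rewrite /nrm mulr_suml; apply: (le_trans (ler_norm_sum _ _ _)).
apply: ler_sum => i _; rewrite mulr_suml.
apply: (le_trans (ler_norm_sum _ _ _)); apply: ler_sum => j _.
have hi := coord_le_vdot z i; have hj := coord_le_vdot z j.
rewrite !normrM; set x := z i 0 in hi *; set y := z j 0 in hj *.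
rewrite mulrAC mulrC ler_wpM2l //.
have hi' : `|x| ^+ 2 <= vdot z z by rewrite real_normK ?num_real.
have hj' : `|y| ^+ 2 <= vdot z z by rewrite real_normK ?num_real.
have := sqr_ge0 (`|x| - `|y|).
rewrite sqrrB; set X := `|x| in hi' *; set Y := `|y| in hj' *.
rewrite [_ * _ *+ 2]mulr2n; lra.
Qed.

Lemma quad_lower n (A : 'M[R]_n) (z : 'cV[R]_n) :
  - (nrm A * vdot z z) <= vdot z (A *m z).
Proof. by have := quad_bound A z; rewrite ler_norml => /andP[]. Qed.

Lemma quad_upper n (A : 'M[R]_n) (z : 'cV[R]_n) :
  vdot z (A *m z) <= nrm A * vdot z z.
Proof. by have := quad_bound A z; rewrite ler_norml => /andP[]. Qed.


Section Main.
Variable n : nat.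
Variable A : 'M[R]_n.+1.
Hypothesis hA : A^T = A.

Let Ray := [set vdot z (A *m z) / vdot z z | z in [set z : 'cV[R]_n.+1 | z != 0]].

Let hub : has_ubound Ray.
Proof.
exists (nrm A) => _ [z /= z0 <-].
by rewrite ler_pdivrMr ?vdot_gt0 // quad_upper.
Qed.

Let hne : Ray !=set0.
Proof.
pose e : 'cV[R]_n.+1 := const_mx 1.
exists (vdot e (A *m e) / vdot e e).
exists e => //=; apply/negP => /eqP/matrixP/(_ ord0 ord0).
by rewrite !mxE => /eqP; rewrite oner_eq0.
Qed.

Let c := sup Ray.

Let rayl z : vdot z (A *m z) <= c * vdot z z.
Proof.
have [->|z0] := eqVneq z 0; first by rewrite !vdot0l mulr0.
have := ub_le_sup hub (ex_intro2 _ _ z z0 erefl).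
by rewrite ler_pdivrMr ?vdot_gt0.
Qed.

Let P := c%:M - A.
Let PT : P^T = P.
Proof. by rewrite /P linearB /= tr_scalar_mx hA. Qed.

Let Pz z : vdot z (P *m z) = c * vdot z z - vdot z (A *m z).
Proof. by rewrite /P mulmxBl mul_scalar_mx vdotDr vdotNr vdotZr. Qed.

Let Ppos z : 0 <= vdot z (P *m z).
Proof. by rewrite Pz subr_ge0 rayl. Qed.

Let K2 := nrm P + 1.
Let K2gt0 : 0 < K2.
Proof. by rewrite /K2 ltr_wpDl // nrm_ge0. Qed.

Let Pup z : vdot z (P *m z) <= K2 * vdot z z.
Proof.
apply: (le_trans (quad_upper _ _)); rewrite ler_wpM2r ?vdot_ge0 //.
by rewrite /K2 lerDl.
Qed.

Let key z : vdot (P *m z) (P *m z) <= K2 * vdot z (P *m z).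
Proof.
set w := P *m z; set t := K2^-1.
have tgt0 : 0 < t by rewrite invr_gt0.
have tK : t * K2 = 1 by rewrite mulVf // gt_eqF.
have H0 := Ppos (z - t *: w).
move: H0; rewrite mulmxBr -scalemxAr vdotDl vdotNl vdotZl !vdotDr !vdotNr !vdotZr.
have -> : vdot z (P *m w) = vdot w w by rewrite vdot_mul PT vdotC.
set s := vdot w w; set s' := vdot w (P *m w); set al := vdot z (P *m z) => H0.
have hs' : t * (t * s') <= t * s.
  have h1 : s' <= K2 * s := Pup w.
  have -> : t * s = t * (t * (K2 * s)) by rewrite (mulrA t K2) tK mul1r.
  by rewrite !ler_pM2l.
have H : 0 <= al - t * s by lra.
have := ler_wpM2l (ltW K2gt0) H; rewrite mulr0 mulrBr mulrA (mulrC K2 t) tK mul1r.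
by rewrite subr_ge0.
Qed.

Let eigc : eigenvalue A c.
Proof.
apply/eigenvalueP.
have : \det (A - c%:M) == 0.
  apply/negPn/negP => dB.
  have uB : A - c%:M \in unitmx by rewrite unitmxE unitfE.
  set B := A - c%:M; set Bi := invmx B.
  set K1 := nrm (Bi^T *m Bi) + 1.
  have K1gt0 : 0 < K1 by rewrite /K1 ltr_wpDl // nrm_ge0.
  have Biup w : vdot (Bi *m w) (Bi *m w) <= K1 * vdot w w.
    rewrite vdot_mul vdotC mulmxA.
    apply: (le_trans (quad_upper _ _)); rewrite ler_wpM2r ?vdot_ge0 //.
    by rewrite /K1 lerDl.
  have epsgt0 : 0 < (K1 * K2)^-1 by rewrite invr_gt0 mulr_gt0.
  have [_ [z /= z0 <-]] := sup_adherent epsgt0 (conj hne hub).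
  rewrite -/c ltr_pdivlMr ?vdot_gt0 // mulrBl => H.
  have H' : vdot z (P *m z) < (K1 * K2)^-1 * vdot z z by rewrite Pz; lra.
  have zB : z = Bi *m (B *m z) by rewrite mulmxA mulVmx // mul1mx.
  have BP : B *m z = - (P *m z) by rewrite /B /P -mulNmx opprB.
  have := Biup (B *m z); rewrite -zB BP vdotNl vdotNr opprK => H1.
  have H2 := ler_wpM2l (ltW K1gt0) (key z).
  have H3 : K1 * (K2 * vdot z (P *m z)) < vdot z z.
    rewrite mulrA -[X in _ < X]mul1r -(mulfV (x := K1 * K2)) ?gt_eqF ?mulr_gt0 //.
    by rewrite -(mulrA (K1 * K2)) ltr_pM2l ?mulr_gt0.
  by have := lt_le_trans H3 (le_trans H1 H2); rewrite ltxx.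
move/det0P => [v v0 vB]; exists v => //.
by move/eqP: vB; rewrite mulmxBr mul_mx_scalar subr_eq0 => /eqP.
Qed.

Let eig_le a : eigenvalue A a -> a <= c.
Proof.
move/eigenvalueP => [v vA v0].
have z0 : v^T != 0 by apply: contra v0 => /eqP/(congr1 trmx); rewrite trmxK trmx0 => ->.
have Az : A *m v^T = a *: v^T by rewrite -hA -trmx_mul vA linearZ.
have := rayl v^T; rewrite Az vdotZr.
by rewrite ler_pM2r ?vdot_gt0.
Qed.

Lemma lmax_spec : eigenvalue A (lambda_max A) /\
  forall z, vdot z (A *m z) <= lambda_max A * vdot z z.
Proof.
have -> : lambda_max A = c.
  apply/eqP; rewrite eq_le; apply/andP; split.
    by apply: ge_sup; [exists c; exact: eigc|move=> a; exact: eig_le].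
  by apply: ub_le_sup; [exists c => a; exact: eig_le|exact: eigc].
by split; [exact: eigc|exact: rayl].
Qed.

End Main.
Lemma rayleigh n (A : 'M[R]_n) : A^T = A ->
  forall z, vdot z (A *m z) <= lambda_max A * vdot z z.
Proof.
case: n A => [A _ z|n A hA]; last exact: (lmax_spec hA).2.
by rewrite !vdotE !big_ord0 mulr0.
Qed.

Lemma lmin_neg n (A : 'M[R]_n) : lambda_min A = - lambda_max (- A).
Proof.
rewrite /lambda_min /lambda_max /inf; congr (- sup _).
apply/seteqP; split => a /=.
  move=> [b /eigenvalueP [v vA v0] <-]; apply/eigenvalueP; exists v => //.
  by rewrite mulmxN vA scaleNr.
move/eigenvalueP => [v vA v0]; exists (- a); last by rewrite opprK.
apply/eigenvalueP; exists v => //.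
by rewrite -[A]opprK mulmxN vA scaleNr.
Qed.

Lemma rayleigh_min n (A : 'M[R]_n) : A^T = A ->
  forall z, lambda_min A * vdot z z <= vdot z (A *m z).
Proof.
move=> hA z; have hA' : (- A)^T = - A by rewrite linearN /= hA.
have := rayleigh hA' z; rewrite mulNmx vdotNr lmin_neg mulNr => H.
by rewrite lerNl.
Qed.

Lemma sym_tmul n (P : 'M[R]_n) : (P^T *m P)^T = P^T *m P.
Proof. by rewrite trmx_mul trmxK. Qed.

Lemma sigma_max_ge0 n (P : 'M[R]_n) : 0 <= sigma_max P.
Proof. exact: sqrtr_ge0. Qed.

Lemma sigma_min_ge0 n (P : 'M[R]_n) : 0 <= sigma_min P.
Proof. exact: sqrtr_ge0. Qed.

Lemma norm_le_sigmax n (P : 'M[R]_n) z :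
  vdot (P *m z) (P *m z) <= sigma_max P ^+ 2 * vdot z z.
Proof.
have H : vdot (P *m z) (P *m z) = vdot z ((P^T *m P) *m z).
  by rewrite vdotC vdot_mul mulmxA.
rewrite H; have R1 := rayleigh (sym_tmul P) z.
rewrite /sigma_max; set l := lambda_max _ in R1 *.
have [l0|l0] := leP 0 l; first by rewrite sqr_sqrtr.
rewrite ler0_sqrtr ?(ltW l0) // expr0n /= mul0r.
apply: (le_trans R1); rewrite mulr_le0_ge0 ?vdot_ge0 // ltW //.
Qed.

Lemma norm_ge_sigmin n (P : 'M[R]_n) z :
  sigma_min P ^+ 2 * vdot z z <= vdot (P *m z) (P *m z).
Proof.
have H : vdot (P *m z) (P *m z) = vdot z ((P^T *m P) *m z).
  by rewrite vdotC vdot_mul mulmxA.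
rewrite H; have R1 := rayleigh_min (sym_tmul P) z.
rewrite /sigma_min; set l := lambda_min _ in R1 *.
have [l0|l0] := leP 0 l; first by rewrite sqr_sqrtr.
rewrite ler0_sqrtr ?(ltW l0) // expr0n /= mul0r -H vdot_ge0 //.
Qed.

Lemma lmax_neg n (A : 'M[R]_n.+1) : A^T = A ->
  (forall z : 'cV_n.+1, z != 0 -> vdot z (A *m z) < 0) -> lambda_max A < 0.
Proof.
move=> hA hneg; have [/eigenvalueP [v vA v0] _] := lmax_spec hA.
have z0 : v^T != 0 by rewrite -(trmx0 R) (inj_eq (@trmx_inj _ _ _)).
have Az : A *m v^T = lambda_max A *: v^T by rewrite -{1}hA -trmx_mul vA linearZ.
have := hneg _ z0; rewrite Az vdotZr.
by rewrite pmulr_llt0 ?vdot_gt0.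
Qed.
End LA.

Section Int.
Context d (T : measurableType d) (R : realType).
Variable mu : {measure set T -> \bar R}.
Variable D : set T.
Local Open Scope ereal_scope.

Lemma ge0_le_int_nm (f g : T -> \bar R) :
  (forall x, D x -> 0 <= f x) -> (forall x, D x -> f x <= g x) ->
  \int[mu]_(x in D) f x <= \int[mu]_(x in D) g x.
Proof.
move=> f0 fg; have g0 x : D x -> 0 <= g x.
  by move=> Dx; apply: le_trans (fg _ Dx); exact: f0.
rewrite !ge0_integralE //; apply: le_ereal_sup => _ [h hf <-].
exists h => // x; apply: le_trans (hf x) _; exact: lee_restrict.
Qed.

Import HBNNSimple.

Lemma scale_int_le (k : R) (f : T -> \bar R) : (0 < k)%R ->
  (forall x, D x -> 0 <= f x) ->
  k%:E * \int[mu]_(x in D) f x <= \int[mu]_(x in D) (k%:E * f x).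
Proof.
move=> k0 f0; have kf0 x : D x -> 0 <= k%:E * f x.
  by move=> Dx; apply: mule_ge0; [rewrite lee_fin ltW|exact: f0].
rewrite -(lee_pdivlMl _ _ k0) !ge0_integralE //; apply: ge_ereal_sup.
move=> _ [h hf <-]; rewrite (lee_pdivlMl _ _ k0).
apply: ereal_sup_ubound; exists (scale_nnsfun h (ltW k0)).
  move=> x /=; have := hf x; rewrite /patch; case: ifPn => Dx hx.
    by rewrite EFinM; apply: lee_wpmul2l => //; rewrite lee_fin ltW.
  by move: hx; rewrite !lee_fin => hx; rewrite mulr_ge0_le0 // ltW.
by rewrite sintegralrM.
Qed.

End Int.
Section Int2.
Context d (T : measurableType d) (R : realType).
Variable mu : {measure set T -> \bar R}.
Variable D : set T.

Lemma scale_int_eq (k : R) (f : T -> \bar R) : (0 < k)%R ->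
  (forall x, D x -> (0 <= f x)%E) ->
  (\int[mu]_(x in D) (k%:E * f x) = k%:E * \int[mu]_(x in D) f x)%E.
Proof.
move=> k0 f0; apply/eqP; rewrite eq_le scale_int_le // andbT.
have ki0 : (0 < k^-1)%R by rewrite invr_gt0.
have kf0 x : D x -> (0 <= k%:E * f x)%E.
  by move=> Dx; apply: mule_ge0; [rewrite lee_fin ltW|exact: f0].
have := scale_int_le mu ki0 kf0.
have -> : (\int[mu]_(x in D) ((k^-1)%:E * (k%:E * f x)) = \int[mu]_(x in D) f x)%E.
  apply: eq_integral => x _; rewrite muleA -EFinM mulVf ?gt_eqF // mul1e //.
by rewrite -(lee_pdivlMl _ _ ki0) invrK.
Qed.

Lemma fine_scale (k : R) (e : \bar R) : (0 < k)%R -> fine (k%:E * e)%E = k * fine e.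
Proof.
move=> k0; case: e => [r| |] /=;
  rewrite ?gt0_mulye ?gt0_muley ?gt0_mulNye ?gt0_muleNy ?lte_fin ?mulr0 //.
Qed.

Lemma Rint_scale (k : R) (g : T -> R) : 0 < k -> (forall x, D x -> 0 <= g x) ->
  Rintegral mu D (fun x => k * g x) = k * Rintegral mu D g.
Proof.
move=> k0 g0; rewrite /Rintegral -fine_scale // -scale_int_eq //.
Qed.

Lemma Rint_fin (g : T -> R) : (forall x, D x -> 0 <= g x) ->
  (\int[mu]_(x in D) (g x)%:E < +oo)%E ->
  ((Rintegral mu D g)%:E = \int[mu]_(x in D) (g x)%:E)%E.
Proof.
move=> g0 gfin; rewrite /Rintegral fineK // ge0_fin_numE //.
by apply: integral_ge0 => x Dx; rewrite lee_fin g0.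
Qed.

Lemma Rint_mono (f g : T -> R) : (forall x, D x -> 0 <= f x) ->
  (forall x, D x -> f x <= g x) ->
  (\int[mu]_(x in D) (g x)%:E < +oo)%E ->
  Rintegral mu D f <= Rintegral mu D g.
Proof.
move=> f0 fg gfin.
have g0 x : D x -> 0 <= g x by move=> Dx; apply: le_trans (fg _ Dx); exact: f0.
have le := @ge0_le_int_nm _ _ _ mu D (fun x => (f x)%:E) (fun x => (g x)%:E).
have fgE : (\int[mu]_(x in D) (f x)%:E <= \int[mu]_(x in D) (g x)%:E)%E.
  by apply: le => x Dx; rewrite lee_fin ?f0 ?fg.
rewrite -lee_fin Rint_fin // ?Rint_fin //; exact: le_lt_trans fgE gfin.
Qed.

Lemma Rint_neg (a : T -> R) : (forall x, D x -> a x <= 0) ->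
  Rintegral mu D a = - Rintegral mu D (fun x => - a x).
Proof.
move=> a0; rewrite /Rintegral -fineN; congr fine.
have a0' x : D x -> ((a x)%:E <= 0)%E by move=> Dx; rewrite lee_fin a0.
rewrite integralE.
have -> : (\int[mu]_(x in D) ((fun x => (a x)%:E)^\+ x) = \int[mu]_(x in D) (cst 0%R x))%E.
  by apply: eq_integral; exact: le0_funeposE.
rewrite integral0 add0e.
by congr (- _)%E; apply: eq_integral => x Dx; rewrite (le0_funenegE a0') //= EFinN.
Qed.

End Int2.
Section PW.
Variable R : realType.

Lemma mx_cvg_entry {X : Type} (F : set_system X) {FF : Filter F} m n
  (f : X -> 'M[R]_(m, n)) (M : 'M[R]_(m, n)) :
  (forall i j, (fun x => f x i j) @ F --> M i j) -> f @ F --> M.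
Proof.
move=> H A [P hP sPA].
have : \forall x \near F, forall i j, P i j (f x i j).
  apply: filter_forall => i; apply: filter_forall => j.
  exact: (H i j _ (hP i j)).
by apply: filterS => x Px; apply: sPA.
Qed.

Lemma entry_cvg {X : Type} (F : set_system X) {FF : Filter F} m n
  (f : X -> 'M[R]_(m, n)) (M : 'M[R]_(m, n)) i j :
  f @ F --> M -> (fun x => f x i j) @ F --> M i j.
Proof.
move=> fM; exact: (continuous_cvg FF (@coord_continuous R m n i j M) fM).
Qed.

Lemma cvg_bsum {X : Type} (F : set_system X) {FF : Filter F} (I : Type) (r : seq I)
  (u : I -> X -> R) (l : I -> R) :
  (forall k, u k @ F --> l k) ->
  (fun x => \sum_(k <- r) u k x) @ F --> \sum_(k <- r) l k.
Proof.
move=> H; elim: r => [|a r IH].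
  rewrite big_nil (_ : (fun x => _) = fun=> 0); first exact: cvg_cst.
  by apply/funext => x; rewrite big_nil.
rewrite big_cons (_ : (fun x => _) = (u a \+ fun x => \sum_(k <- r) u k x)).
  exact: cvgD.
by apply/funext => x; rewrite big_cons.
Qed.

Lemma cvg_mulmx {X : Type} (F : set_system X) {FF : Filter F} m n p
  (f : X -> 'M[R]_(m, n)) (g : X -> 'M[R]_(n, p)) (A : 'M[R]_(m, n)) (B : 'M[R]_(n, p)) :
  f @ F --> A -> g @ F --> B -> (fun x => f x *m g x) @ F --> A *m B.
Proof.
move=> fA gB; apply: mx_cvg_entry => i j.
rewrite mxE (_ : (fun x => _) = fun x => \sum_k (f x i k * g x k j)).
  apply: cvg_bsum => k; apply: cvgM; exact: entry_cvg.
by apply/funext => x; rewrite mxE.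
Qed.

Lemma pc_mulmx m n p (f : R -> 'M[R]_(m, n)) (g : R -> 'M[R]_(n, p)) :
  piecewise_continuous f -> piecewise_continuous g ->
  piecewise_continuous (fun t => f t *m g t).
Proof.
move=> pf pg T; have [s1 [c1 [l1 r1]]] := pf T; have [s2 [c2 [l2 r2]]] := pg T.
exists (s1 ++ s2); split; [|split].
- move=> t t0 tT; rewrite mem_cat negb_or => /andP[ts1 ts2].
  exact: cvg_mulmx (c1 _ t0 tT ts1) (c2 _ t0 tT ts2).
- move=> t t0 tT; exact: cvgP (cvg_mulmx (l1 _ t0 tT) (l2 _ t0 tT)).
- move=> t t0 tT; exact: cvgP (cvg_mulmx (r1 _ t0 tT) (r2 _ t0 tT)).
Qed.

Lemma I0E (T : R) : I0 T = `[0, T]%classic.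
Proof. by apply/seteqP; split => t /=; rewrite in_itv. Qed.

Lemma I0_meas (T : R) : measurable (I0 T).
Proof. by rewrite I0E; exact: measurable_itv. Qed.

Lemma seq_closed (s : seq R) : closed [set` s].
Proof.
exact: (accessible_finite_set_closed.1 (hausdorff_accessible (@Rhausdorff R))
  _ (finite_seq s)).
Qed.

Lemma meas_seq (s : seq R) (g : R -> R) : measurable_fun [set` s] g.
Proof.
elim: s => [|a s IH].
  by rewrite (_ : [set` [::]] = set0); [exact: measurable_fun_set0|
    by apply/seteqP; split => x].
rewrite (_ : [set` (a :: s)] = [set a] `|` [set` s]); last first.
  apply/seteqP; split => x /=; rewrite inE.
    by case/orP => [/eqP ->|xs]; [left|right].
  by case => [->|xs]; rewrite ?eqxx ?xs ?orbT.
have m1 : measurable [set a] by exact: measurable_set1.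
have m2 : measurable [set` s].
  exact: (closed_measurable (@seq_closed s)).
apply/(measurable_funU _ m1 m2); split => //.
exact: measurable_fun_set1.
Qed.

Lemma pc_meas m n (f : R -> 'M[R]_(m, n)) : piecewise_continuous f ->
  forall T i j, measurable_fun (I0 T) (fun t => f t i j).
Proof.
move=> pf T i j; have [s [c _]] := pf T.
set D := `]0, T[%classic `&` ~` [set` s].
set E := [set` [:: 0, T & s]].
have oD : open D by apply: openI; [exact: interval_open|
  exact: (closed_openC (@seq_closed s))].
have mD : measurable D by exact: open_measurable.
have mE : measurable E by exact: (closed_measurable (@seq_closed [:: 0, T & s])).
apply: (measurable_funS (E := D `|` E)); first exact: measurableU.
  move=> t /= /andP[t0 tT].
  have [->|t0'] := eqVneq t 0; first by right; rewrite /E /= inE eqxx.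
  have [->|tT'] := eqVneq t T; first by right; rewrite /E /= !inE eqxx orbT.
  have [ts|ts] := boolP (t \in s); first by right; rewrite /E /= !inE ts !orbT.
  left; split; last by move=> /=; apply/negP: ts.
  by rewrite /= in_itv /= !lt_neqAle t0 tT eq_sym t0' tT'.
apply/measurable_funU => //; split; last exact: meas_seq.
apply: open_continuous_measurable_fun => // t; rewrite inE => -[/= tI tns].
move: tI; rewrite in_itv /= => /andP[t0 tT].
apply: (continuous_comp (f := f) (g := fun M : 'M[R]_(m, n) => M i j)).
  by apply: c => //; [exact: ltW|apply/negP].
exact: (@coord_continuous R m n i j).
Qed.

End PW.
Section Misc.
Variable R : realType.
Local Notation mu := (@lebesgue_measure R).

Lemma meas_mulmx (D : set R) m n p (f : R -> 'M[R]_(m, n)) (g : R -> 'M[R]_(n, p)) :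
  (forall i j, measurable_fun D (fun t => f t i j)) ->
  (forall i j, measurable_fun D (fun t => g t i j)) ->
  forall i j, measurable_fun D (fun t => (f t *m g t) i j).
Proof.
move=> hf hg i j.
rewrite (_ : (fun t => _) = fun t => \sum_k (f t i k * g t k j)); last first.
  by apply/funext => t; rewrite mxE.
apply: measurable_sum => k; exact: measurable_funM.
Qed.

Lemma meas_vdot (D : set R) n (a b : R -> 'cV[R]_n) :
  (forall i j, measurable_fun D (fun t => a t i j)) ->
  (forall i j, measurable_fun D (fun t => b t i j)) ->
  measurable_fun D (fun t => vdot (a t) (b t)).
Proof.
move=> ha hb; rewrite (_ : (fun t => _) = fun t => \sum_i (a t i 0 * b t i 0)); last first.
  by apply/funext => t; rewrite vdotE.
apply: measurable_sum => k; exact: measurable_funM.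
Qed.

Lemma meas_cst_mx (D : set R) m n (M : 'M[R]_(m, n)) i j :
  measurable_fun D (fun _ : R => M i j).
Proof. exact: measurable_cst. Qed.

Lemma fin_bound0 (D : set R) (f g : R -> R) (K : R) :
  (forall x, D x -> 0 <= f x) ->
  (forall x, D x -> f x <= K * g x) -> (forall x, D x -> 0 <= g x) ->
  (\int[mu]_(x in D) (g x)%:E < +oo)%E ->
  (\int[mu]_(x in D) (f x)%:E < +oo)%E.
Proof.
move=> f0 fg g0 gfin; set K' := `|K| + 1.
have K'0 : 0 < K' by rewrite /K' ltr_wpDl.
have le1 : (\int[mu]_(x in D) (f x)%:E <= \int[mu]_(x in D) (K'%:E * (g x)%:E))%E.
  apply: ge0_le_int_nm => x Dx; first by rewrite lee_fin f0.
  rewrite -EFinM lee_fin; apply: (le_trans (fg _ Dx)); rewrite ler_wpM2r ?g0 //.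
  by rewrite /K' (le_trans (ler_norm _)) // lerDl.
have g0' : forall x, D x -> (0 <= (g x)%:E)%E by move=> x Dx; rewrite lee_fin g0.
have E := scale_int_eq mu K'0 g0'; rewrite /= in E.
apply: (le_lt_trans le1); rewrite E.
by apply: lte_mul_pinfty => //; rewrite lee_fin ltW.
Qed.

Lemma L2_fin (n : nat) (u : R -> 'cV[R]_n) T : loc_L2 u -> 0 <= T ->
  (\int[mu]_(x in I0 T) (vdot (u x) (u x))%:E < +oo)%E.
Proof.
move=> hu T0; have /integrableP [_ H] := hu T T0.
apply: le_lt_trans H; apply: ge0_le_int_nm => x Dx /=; first by rewrite lee_fin vdot_ge0.
by rewrite ?gee0_abs ?ger0_norm ?lee_fin ?vdot_ge0.
Qed.

End Misc.

Unset Implicit Arguments.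

Lemma sq_le (R : realType) (a b : R) : 0 <= a -> a <= b -> a ^+ 2 <= b ^+ 2.
Proof. by move=> a0 ab; rewrite !expr2 ler_pM. Qed.

Lemma eps_lemma (R : realType) n (Q : 'M[R]_n) : (0 < n)%N -> Q^T = Q -> neg_def Q ->
  lambda_max Q < 0.
Proof. by case: n Q => [//|n] Q _ hQs hQn; apply: lmax_neg. Qed.

Theorem lemma1 (R : realType) (nx nu ny : nat)
  (f : 'cV[R]_nx -> 'cV[R]_nu -> 'cV[R]_nx)
  (h : 'cV[R]_nx -> 'cV[R]_nu -> 'cV[R]_ny)
  (V : 'cV[R]_nx -> R) (Q : 'M[R]_ny) (S : 'M[R]_(ny, nu)) (Rm : 'M[R]_nu)
  (Phiu : R -> 'M[R]_nu) (Phiy : R -> 'M[R]_ny) :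
  sym_mx Q -> neg_def Q -> sym_mx Rm ->
  L2e_outputs f h ->
  QSR_dissipative f h V Q S Rm ->
  scheduling_matrix Phiu -> scheduling_matrix Phiy ->
  (forall t, 0 <= t -> (Phiy t)^T *m S = S *m Phiu t) ->
  (exists t, 0 <= t /\ Phiy t != 0) ->
  let sy := sup_t (fun t => sigma_max (Phiy t)) in
  let su := sup_t (fun t => sigma_max (Phiu t)) in
  let nuu := inf_t (fun t => sigma_min (Phiu t)) in
  let eps := - lambda_max Q in
  let delta := if 0 < lambda_max Rm then lambda_max Rm * sy ^+ 2 * su ^+ 2
               else lambda_max Rm * sy ^+ 2 * nuu ^+ 2 in
  0 < eps /\
  (forall z, 0 <= sy ^+ 2 * V z) /\
  forall (u : R -> 'cV[R]_nu) (x : R -> 'cV[R]_nx) (y : R -> 'cV[R]_ny) (T : R),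
    L2e u -> trajectory f h (fun t => Phiu t *m u t) x y -> 0 <= T ->
    let ybar := fun t => Phiy t *m y t in
    sy ^+ 2 * (V (x T) - V (x 0)) <=
      - eps * norm2T2 ybar T + 2 * sy ^+ 2 * inner ybar (fun t => S *m u t) T
      + delta * norm2T2 u T.
Proof.
move=> hQs hQn hRs hout [V0 hdiss] [pcu [Mu hMu]] [pcy [My hMy]] hcomm [t0 [t00 hPy0]].
move=> sy su nuu eps delta.
have hsy t : 0 <= t -> sigma_max (Phiy t) <= sy.
  move=> t0'; rewrite /sy /sup_t; apply: ub_le_sup; last by exists t.
  by exists My => _ [t' /= t'0 <-]; exact: hMy.
have hsu t : 0 <= t -> sigma_max (Phiu t) <= su.
  move=> t0'; rewrite /su /sup_t; apply: ub_le_sup; last by exists t.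
  by exists Mu => _ [t' /= t'0 <-]; exact: hMu.
have hnu t : 0 <= t -> nuu <= sigma_min (Phiu t).
  move=> t0'; rewrite /nuu /inf_t; apply: ge_inf; last by exists t.
  by exists 0 => _ [t' _ <-]; exact: sigma_min_ge0.
have hnu0 : 0 <= nuu.
  rewrite /nuu /inf_t; apply: lb_le_inf; first by exists (sigma_min (Phiu 0)); exists 0 => //=.
  by move=> _ [t' _ <-]; exact: sigma_min_ge0.
have [i [j hij]] : exists i j, Phiy t0 i j != 0.
  have : ~ (forall i j, Phiy t0 i j = 0).
    by move=> H; move/eqP: hPy0; apply; apply/matrixP => i j; rewrite H mxE.
  move/existsNP => [i /existsNP [j /eqP hij]]; by exists i, j.
have sig0 : 0 < sigma_max (Phiy t0).
  pose e : 'cV[R]_ny := delta_mx j 0.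
  have w0 : Phiy t0 *m e != 0.
    apply/negP; rewrite -colE => /eqP /matrixP /(_ i 0); rewrite !mxE.
    by move/eqP: hij.
  have H1 := vdot_gt0 w0; have H2 := norm_le_sigmax (Phiy t0) e.
  rewrite lt_neqAle sigma_max_ge0 andbT; apply/eqP => s0.
  by move: H2; rewrite -s0 expr0n /= mul0r => H2; have := lt_le_trans H1 H2; rewrite ltxx.
have sy0 : 0 < sy := lt_le_trans sig0 (hsy _ t00).
have s20 : 0 < sy ^+ 2 by rewrite exprn_gt0.
have heps : 0 < eps.
  rewrite /eps oppr_gt0; apply: eps_lemma => //.
  exact: leq_ltn_trans (leq0n i) (ltn_ord i).
split => //; split.
  by move=> z; apply: mulr_ge0; [exact: sqr_ge0|exact: V0].
move=> u x y T hu htraj hT; cbv zeta.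
set Pu := fun t => Phiu t *m u t.
have Mu0 : 0 <= Mu := le_trans (sigma_max_ge0 _) (hMu 0 (lexx 0)).
have mPu T' : forall i j, measurable_fun (I0 T') (fun t => Pu t i j).
  by apply: meas_mulmx; [exact: pc_meas pcu T'|exact: pc_meas hu.1 T'].
have PuC t : 0 <= t -> vdot (Pu t) (Pu t) <= Mu ^+ 2 * vdot (u t) (u t).
  move=> t0'; apply: (le_trans (norm_le_sigmax _ _)); rewrite ler_wpM2r ?vdot_ge0 //.
  by apply: sq_le; [exact: sigma_max_ge0|exact: hMu].
have hPu : L2e Pu.
  split; first exact: pc_mulmx pcu hu.1.
  move=> T' hT'; apply/integrableP; split.
    by apply/measurable_EFinP; apply: meas_vdot; exact: mPu.
  have F := fin_bound0 (f := fun t => vdot (Pu t) (Pu t)) (K := Mu ^+ 2)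
    (fun t _ => vdot_ge0 _) (fun t Dt => PuC t (andP Dt).1) (fun t _ => vdot_ge0 _)
    (L2_fin hu.2 hT').
  apply: le_lt_trans F; apply: ge0_le_int_nm => t Dt /=; first by [].
  by rewrite ?gee0_abs ?ger0_norm ?lee_fin ?vdot_ge0.
have hy : loc_L2 y := hout _ _ _ hPu htraj.
have H := hdiss _ _ _ T hPu htraj hT.

have mD := I0_meas T.
have DT t : I0 T t -> 0 <= t by case/andP.
have hb : inner y (fun t => S *m Pu t) T = inner (fun t => Phiy t *m y t) (fun t => S *m u t) T.
  apply: eq_Rintegral => t; rewrite in_setE => /DT t0'.
  by rewrite /Pu mulmxA -hcomm // -mulmxA vdot_mul trmxK.
have Ca : sy ^+ 2 * inner y (fun t => Q *m y t) T <=
          - eps * norm2T2 (fun t => Phiy t *m y t) T.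
  rewrite /inner /norm2T2 /inner.
  set a := fun t => vdot (y t) (Q *m y t).
  set A := fun t => vdot (Phiy t *m y t) (Phiy t *m y t).
  have lamQ : lambda_max Q = - eps by rewrite /eps opprK.
  have ha t : a t <= - eps * vdot (y t) (y t) by rewrite -lamQ; exact: rayleigh.
  have ha0 t : I0 T t -> a t <= 0.
    move=> _; apply: (le_trans (ha t)).
    by rewrite mulNr oppr_le0 mulr_ge0 ?vdot_ge0 // ltW.
  have hA t : I0 T t -> eps * A t <= sy ^+ 2 * (- a t).
    move=> Dt; have t0' := DT _ Dt.
    have h1 : A t <= sy ^+ 2 * vdot (y t) (y t).
      apply: (le_trans (norm_le_sigmax _ _)); rewrite ler_wpM2r ?vdot_ge0 //.
      by apply: sq_le; [exact: sigma_max_ge0|exact: hsy].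
    have h2 : eps * vdot (y t) (y t) <= - a t by rewrite lerNr -mulNr; exact: ha.
    apply: (le_trans (ler_wpM2l (ltW heps) h1)).
    by rewrite (mulrCA eps) ler_wpM2l // ltW.
  have hab t : I0 T t -> sy ^+ 2 * (- a t) <= (sy ^+ 2 * nrm Q) * vdot (y t) (y t).
    move=> _; rewrite -mulrA ler_wpM2l ?(ltW s20) //.
    by rewrite lerNl; exact: quad_lower.
  have fin : (\int[lebesgue_measure]_(t in I0 T) (sy ^+ 2 * (- a t))%:E < +oo)%E.
    apply: (fin_bound0 (g := fun t => vdot (y t) (y t)) (K := sy ^+ 2 * nrm Q)).
    - by move=> t Dt; rewrite mulr_ge0 ?(ltW s20) // oppr_ge0 ha0.
    - exact: hab.
    - by move=> t _; exact: vdot_ge0.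
    - exact: L2_fin hy hT.
  rewrite (Rint_neg lebesgue_measure ha0) mulrN -Rint_scale //; last first.
    by move=> t Dt; rewrite oppr_ge0 ha0.
  rewrite mulNr -Rint_scale //; last by move=> t _; exact: vdot_ge0.
  rewrite lerN2; apply: Rint_mono => //.
  by move=> t _; rewrite mulr_ge0 ?vdot_ge0 // ltW.
have Cc : sy ^+ 2 * inner Pu (fun t => Rm *m Pu t) T <= delta * norm2T2 u T.
  rewrite /inner /norm2T2 /inner.
  set c := fun t => vdot (Pu t) (Rm *m Pu t).
  set C := fun t => vdot (u t) (u t).
  have mc : measurable_fun (I0 T) c.
    apply: meas_vdot; first exact: mPu.
    apply: meas_mulmx; [move=> i' j'; exact: measurable_cst|exact: mPu].
  have iC : lebesgue_measure.-integrable (I0 T) (EFin \o C) := hu.2 T hT.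
  set K := nrm Rm * Mu ^+ 2.
  have K0 : 0 <= K by rewrite mulr_ge0 ?nrm_ge0 ?sqr_ge0.
  have hcabs t : I0 T t -> `|c t| <= K * C t.
    move=> Dt; apply: (le_trans (quad_bound _ _)); rewrite /K -mulrA.
    by rewrite ler_wpM2l ?nrm_ge0 // PuC // DT.
  have ic : lebesgue_measure.-integrable (I0 T) (EFin \o c).
    apply: (@le_integrable _ _ _ lebesgue_measure (I0 T) _ (EFin \o c)
      (fun x => K%:E * (EFin \o C) x)%E).
    - exact: I0_meas.
    - exact/measurable_EFinP.
    - move=> t Dt /=; rewrite lee_fin [`|K * _|]ger0_norm; first exact: hcabs.
      exact: mulr_ge0 K0 (vdot_ge0 _).
    - apply: integrableZl; [exact: I0_meas|exact: iC].
  have hcd t : I0 T t -> sy ^+ 2 * c t <= delta * C t.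
    move=> Dt; have t0' := DT _ Dt.
    have r1 : c t <= lambda_max Rm * vdot (Pu t) (Pu t) := rayleigh hRs _.
    rewrite /delta; case: ifPn => hl.
      have r2 : vdot (Pu t) (Pu t) <= su ^+ 2 * C t.
        apply: (le_trans (norm_le_sigmax _ _)); rewrite ler_wpM2r ?vdot_ge0 //.
        by apply: sq_le; [exact: sigma_max_ge0|exact: hsu].
      have r3 := ler_wpM2l (ltW hl) r2.
      have := ler_wpM2l (ltW s20) (le_trans r1 r3).
      have E : sy ^+ 2 * (lambda_max Rm * (su ^+ 2 * C t)) =
        lambda_max Rm * sy ^+ 2 * su ^+ 2 * C t by ring.
      by rewrite E.
    rewrite -leNgt in hl.
    have r2 : nuu ^+ 2 * C t <= vdot (Pu t) (Pu t).
      apply: le_trans (norm_ge_sigmin _ _); rewrite ler_wpM2r ?vdot_ge0 //.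
      by apply: sq_le => //; exact: hnu.
    have r3 := ler_wnM2l hl r2.
    have := ler_wpM2l (ltW s20) (le_trans r1 r3).
    have E : sy ^+ 2 * (lambda_max Rm * (nuu ^+ 2 * C t)) =
      lambda_max Rm * sy ^+ 2 * nuu ^+ 2 * C t by ring.
    by rewrite E.
  have E1 : Rintegral lebesgue_measure (I0 T) (fun t => sy ^+ 2 * c t) =
      sy ^+ 2 * Rintegral lebesgue_measure (I0 T) c.
    by apply: RintegralZl; [exact: I0_meas|exact: ic].
  have E2 : Rintegral lebesgue_measure (I0 T) (fun t => delta * C t) =
      delta * Rintegral lebesgue_measure (I0 T) C.
    by apply: RintegralZl; [exact: I0_meas|exact: iC].
  have L : Rintegral lebesgue_measure (I0 T) (fun t => sy ^+ 2 * c t) <=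
      Rintegral lebesgue_measure (I0 T) (fun t => delta * C t).
    apply: le_Rintegral; [exact: I0_meas| | |exact: hcd].
      rewrite (_ : (EFin \o _) = (fun x => (sy ^+ 2)%:E * (EFin \o c) x)%E); last first.
        by apply/funext => t.
      apply: integrableZl; [exact: I0_meas|exact: ic].
    rewrite (_ : (EFin \o _) = (fun x => delta%:E * (EFin \o C) x)%E); last first.
      by apply/funext => t.
    apply: integrableZl; [exact: I0_meas|exact: iC].
  by rewrite -E1 -E2.
have := ler_wpM2l (ltW s20) H.
rewrite -hb; move: Ca Cc; lra.
Qed.
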